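(* There exists an independence system that is nearly finitary but is not $k$-nearly finitary for any $k\in\mathbb{N}$.
   Context: An independence system is a pair $I=(E,\mathcal{L})$ with $\mathcal{L}\subseteq 2^E$, $\emptyset\in\mathcal{L}$, and $\mathcal{L}$ closed under taking subsets. Its bases are the inclusion-maximal elements of $\mathcal{L}$. Its finitarization is $I^{\mathrm{fin}}=(E,\mathcal{L}^{\mathrm{fin}})$ where $\mathcal{L}^{\mathrm{fin}}$ consists of the sets all of whose finite subsets lie in $\mathcal{L}$. $I$ is nearly finitary if whenever a base $F$ of $I^{\mathrm{fin}}$ contains a base $B$ of $I$, the set $F\setminus B$ is finite; $I$ is $k$-nearly finitary if $|F\setminus B|\le k$ for every such pair. *)

(* Defs.v *)
From Stdlib Require Import List.

Definition subset {E : Type} (A B : E -> Prop) : Prop := forall x, A x -> B x.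

Definition finite_set {E : Type} (A : E -> Prop) : Prop :=
  exists l : list E, forall x, A x -> In x l.

Definition card_le {E : Type} (A : E -> Prop) (k : nat) : Prop :=
  exists l : list E, length l <= k /\ forall x, A x -> In x l.

Definition setD {E : Type} (A B : E -> Prop) : E -> Prop := fun x => A x /\ ~ B x.

Definition empty_set {E : Type} : E -> Prop := fun _ => False.

Definition independence_system {E : Type} (L : (E -> Prop) -> Prop) : Prop :=
  L empty_set /\ (forall A B, L B -> subset A B -> L A).

Definition is_base {E : Type} (L : (E -> Prop) -> Prop) (B : E -> Prop) : Prop :=
  L B /\ (forall C, L C -> subset B C -> subset C B).

Definition finitarization {E : Type} (L : (E -> Prop) -> Prop) : (E -> Prop) -> Prop :=
  fun F => forall A, finite_set A -> subset A F -> L A.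

Definition nearly_finitary {E : Type} (L : (E -> Prop) -> Prop) : Prop :=
  forall B F, is_base L B -> is_base (finitarization L) F -> subset B F ->
    finite_set (setD F B).

Definition k_nearly_finitary {E : Type} (k : nat) (L : (E -> Prop) -> Prop) : Prop :=
  forall B F, is_base L B -> is_base (finitarization L) F -> subset B F ->
    card_le (setD F B) k.

(* Main.v *)
Require Import Defs.
From Stdlib Require Import List Lia Arith.

Definition LL (S : nat * nat -> Prop) : Prop :=
  exists n, (forall x, S x -> fst x = n) /\
    ((exists m, forall x, S x -> snd x < m) \/ (forall x, S x -> n <= snd x)).

Definition An (n : nat) : nat * nat -> Prop := fun x => fst x = n /\ n <= snd x.
Definition Cn (n : nat) : nat * nat -> Prop := fun x => fst x = n.

Fixpoint bnd (l : list (nat * nat)) : nat :=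
  match l with nil => 0 | x :: r => Nat.max (S (snd x)) (bnd r) end.

Lemma bnd_spec l x : In x l -> snd x < bnd l.
Proof. induction l; cbn [bnd In]; intros H; [contradiction|].
  pose proof (Nat.le_max_l (S (snd a)) (bnd l)). pose proof (Nat.le_max_r (S (snd a)) (bnd l)).
  destruct H as [E|E]; [subst; lia|]. specialize (IHl E); lia. Qed.

Lemma fin_Cn n : finitarization LL (Cn n).
Proof.
  intros A [l Hl] HA. exists n. split.
  - intros x Hx. exact (HA x Hx).
  - left. exists (bnd l). intros x Hx. apply bnd_spec, Hl, Hx.
Qed.

Lemma fin_same F x y : finitarization LL F -> F x -> F y -> fst x = fst y.
Proof.
  intros H Hx Hy.
  destruct (H (fun z => z = x \/ z = y)) as [n [Hn _]].
  - exists (x :: y :: nil). intros z [->| ->]; simpl; auto.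
  - intros z [->| ->]; auto.
  - rewrite (Hn x (or_introl eq_refl)), (Hn y (or_intror eq_refl)); reflexivity.
Qed.

Lemma base_Cn n : is_base (finitarization LL) (Cn n).
Proof.
  split; [apply fin_Cn|]. intros C HC Hs x Hx.
  unfold Cn. rewrite (fin_same C x (n,0) HC Hx (Hs (n,0) eq_refl)). reflexivity.
Qed.

Lemma base_An n : is_base LL (An n).
Proof.
  split.
  - exists n. split; [intros x [H _]; exact H|]. right. intros x [_ H]; exact H.
  - intros C [n' [Hn Hb]] Hs x Hx.
    assert (Hnn : fst (n,n) = n') by (apply Hn, Hs; split; simpl; auto).
    simpl in Hnn; subst n'.
    destruct Hb as [[m Hm]|Hb].
    + exfalso. assert (HA : An n (n, n+m)) by (split; simpl; lia).
      assert (H := Hm (n, n+m) (Hs _ HA)).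
      simpl in H; lia.
    + split; auto.
Qed.

Lemma base_LL B : is_base LL B -> exists n, forall x, B x <-> An n x.
Proof.
  intros [[n [Hn Hb]] Hmax].
  destruct Hb as [[m Hm]|Hb].
  - exfalso.
    assert (Hs : subset B (fun z => B z \/ z = (n, m))) by (intros z Hz; auto).
    assert (HL : LL (fun z => B z \/ z = (n, m))).
    { exists n. split.
      - intros z [Hz| ->]; auto.
      - left. exists (S m). intros z [Hz| ->]; simpl; [specialize (Hm z Hz)|]; lia. }
    specialize (Hmax _ HL Hs (n,m) (or_intror eq_refl)).
    specialize (Hm _ Hmax). simpl in Hm. lia.
  - exists n. intros x. split.
    + intros Hx. split; auto.
    + intros Hx. apply (Hmax (An n)); [apply base_An| |exact Hx].
      intros z Hz; split; auto.
Qed.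

Lemma diff_card B F n : (forall x, B x <-> An n x) -> is_base (finitarization LL) F ->
  subset B F -> card_le (setD F B) n.
Proof.
  intros HB [HF _] Hs.
  exists (map (fun i => (n, i)) (seq 0 n)). split; [rewrite length_map, length_seq; lia|].
  intros [a b] [Hx Hnx].
  assert (Hnn : B (n,n)) by (apply HB; split; simpl; auto).
  pose proof (fin_same F (a,b) (n,n) HF Hx (Hs _ Hnn)) as E. simpl in E; subst a.
  apply in_map_iff. exists b. split; auto. apply in_seq.
  destruct (le_lt_dec n b); [|lia]. exfalso. apply Hnx, HB. split; auto.
Qed.

Theorem theorem4p2p1 :
  exists (E : Type) (L : (E -> Prop) -> Prop),
    independence_system L /\ nearly_finitary L /\
    (forall k : nat, ~ k_nearly_finitary k L).
Proof.
  exists (nat * nat)%type, LL. split; [|split].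
  - split.
    + exists 0. split; [intros x []|]. right. intros x [].
    + intros A B [n [Hn Hb]] Hs. exists n. split; [intros x Hx; apply Hn, Hs, Hx|].
      destruct Hb as [[m Hm]|Hb]; [left; exists m|right]; intros x Hx; apply Hm || apply Hb; apply Hs, Hx.
  - intros B F HB HF Hs. destruct (base_LL B HB) as [n Hn].
    destruct (diff_card B F n Hn HF Hs) as [l [_ Hl]]. exists l; exact Hl.
  - intros k Hk.
    destruct (Hk (An (S k)) (Cn (S k)) (base_An _) (base_Cn _)) as [l [Hlen Hl]].
    + intros x [H _]; exact H.
    + assert (Hinc : incl (map (fun i => (S k, i)) (seq 0 (S k))) l).
      { intros x Hx. apply Hl. apply in_map_iff in Hx as [i [<- Hi]].
        apply in_seq in Hi. split; [reflexivity|]. intros [_ H]; simpl in H; lia. }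
      assert (Hnd : NoDup (map (fun i => (S k, i)) (seq 0 (S k)))).
      { apply NoDup_map_NoDup_ForallPairs; [|apply seq_NoDup].
        intros a b _ _ E; injection E; auto. }
      pose proof (NoDup_incl_length Hnd Hinc) as H.
      rewrite length_map, length_seq in H. lia.
Qed.
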